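(* Let $G=(S,r)$ be a ranked set with $|S|=n$. Let $S(G;u,v)=\sum_{A\subseteq S}u^{r(S)-r(A)}v^{|A|-r(A)}$ be its corank-nullity generating function, and let $T(G;x,y)=S(G;x-1,y-1)$ be its Tutte polynomial. Write $T(G;x,y)=\sum_{i,j\in\mathbb{Z}} b_{i,j}x^iy^j$. Then: (1) for every integer $k$ with $0\le k<n$, $$\sum_{i=0}^{k}\sum_{j=0}^{k-i}(-1)^j\binom{k-i}{j}b_{i,j}=0;$$ (2) for $k=n$, $$\sum_{i=0}^{n}\sum_{j=0}^{n-i}(-1)^j\binom{n-i}{j}b_{i,j}=(-1)^{n-r(S)}.$$
   Context: A ranked set is a pair $G=(S,r)$ where $S$ is a finite set and $r:2^S\to\mathbb{Z}$ is a function satisfying: $r(\emptyset)=0$; $r(A)\le r(S)$ for all $A\subseteq S$; and $r(A)\le |A|$ for all $A\subseteq S$. These conditions ensure $T(G;x,y)$ is a polynomial in $x,y$. *)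

(* Defs.v *)
From HB Require Import structures.
From mathcomp Require Import all_boot all_order all_algebra.
Set Implicit Arguments. Unset Strict Implicit. Unset Printing Implicit Defensive.
Import Order.TTheory GRing.Theory Num.Theory.
Local Open Scope ring_scope.

Definition ranked_set (S : finType) (r : {set S} -> int) : Prop :=
  [/\ r set0 = 0, (forall A, r A <= r setT) & (forall A, r A <= (#|A|)%:Z)].

(* Bivariate polynomials over int: the outer variable is x, the inner one y.
   A polynomial P : {poly {poly int}} represents sum_{i,j} (P`_i)`_j x^i y^j. *)
Definition bvX : {poly {poly int}} := 'X.
Definition bvY : {poly {poly int}} := ('X)%:P.

(* corank-nullity generating function S(G;u,v) evaluated at (u,v) with u,v
   bivariate polynomials; exponents are nonnegative for ranked sets, so we
   take them as natural numbers via absz. *)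
Definition corank_nullity (S : finType) (r : {set S} -> int)
  (u v : {poly {poly int}}) : {poly {poly int}} :=
  \sum_(A : {set S}) u ^+ `|r setT - r A|%N * v ^+ `|(#|A|)%:Z - r A|%N.

Definition tutte (S : finType) (r : {set S} -> int) : {poly {poly int}} :=
  corank_nullity r (bvX - 1) (bvY - 1).

Definition tutte_coef (S : finType) (r : {set S} -> int) (i j : nat) : int :=
  ((tutte r)`_i)`_j.

(* Main.v *)
Require Import Defs.
From HB Require Import structures.
From mathcomp Require Import all_boot all_order all_algebra.
From mathcomp Require Import zify ring.
Import Order.TTheory GRing.Theory Num.Theory.
Local Open Scope ring_scope.

Definition Lf (k : nat) (F : {poly {poly int}}) : int :=
  \sum_(i < k.+1) \sum_(j < (k - i).+1) (-1) ^+ j * ('C(k - i, j))%:Z * (F`_i)`_j.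

Lemma LD k F G : Lf k (F + G) = Lf k F + Lf k G.
Proof.
rewrite /Lf -big_split /=; apply: eq_bigr => i _.
rewrite -big_split /=; apply: eq_bigr => j _.
by rewrite !coefD mulrDr.
Qed.

Lemma LN k F : Lf k (- F) = - Lf k F.
Proof.
rewrite /Lf -sumrN; apply: eq_bigr => i _; rewrite -sumrN; apply: eq_bigr => j _.
by rewrite !coefN mulrN.
Qed.

Lemma L0 k : Lf k 0 = 0.
Proof. by rewrite /Lf big1 // => i _; rewrite big1 // => j _; rewrite !coef0 mulr0. Qed.

Lemma LC k c F : Lf k (c%:P%:P * F) = c * Lf k F.
Proof.
rewrite /Lf mulr_sumr; apply: eq_bigr => i _; rewrite mulr_sumr; apply: eq_bigr => j _.
by rewrite !coefCM mulrCA.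
Qed.

Lemma Lsum k (I : Type) (s : seq I) (F : I -> {poly {poly int}}) :
  Lf k (\sum_(i <- s) F i) = \sum_(i <- s) Lf k (F i).
Proof. exact: (big_morph _ (LD k) (L0 k)). Qed.

Lemma Lmono k i j : Lf k (('X^j)%:P * 'X^i) =
  if (i <= k)%N then (-1) ^+ j * ('C(k - i, j))%:Z else 0.
Proof.
rewrite /Lf.
have -> : \sum_(a < k.+1) \sum_(b < (k - a).+1)
  (-1) ^+ b * ('C(k - a, b))%:Z * ((('X^j)%:P * 'X^i : {poly {poly int}})`_a)`_b =
  \sum_(a < k.+1 | a == i :> nat) \sum_(b < (k - a).+1)
  (-1) ^+ b * ('C(k - a, b))%:Z * ((('X^j)%:P * 'X^i : {poly {poly int}})`_a)`_b.
  rewrite [RHS]big_mkcond /=; apply: eq_bigr => a _.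
  case: eqP => // /eqP ha; apply: big1 => b _.
  rewrite coefMXn; case: ltnP => hai; first by rewrite coef0 mulr0.
  by rewrite coefC subn_eq0 (negbTE (_ : ~~ (a <= i)%N)) ?coef0 ?mulr0 //; lia.
rewrite (big_ord1_eq _ (fun a => \sum_(b < (k - a).+1)
  (-1) ^+ b * ('C(k - a, b))%:Z * ((('X^j)%:P * 'X^i : {poly {poly int}})`_a)`_b)).
rewrite ltnS; case: leqP => // hik.
rewrite coefMXn ltnn subnn coefC /=.
under eq_bigr => b _ do rewrite coefXn.

have [hj|hj] := ltnP j (k - i).+1.
  rewrite (bigD1 (Ordinal hj)) //= eqxx mulr1 big1 ?addr0 // => b hb.
  rewrite (_ : (b == j :> nat) = false) ?mulr0 //.
  by apply/negbTE; apply: contra hb => /eqP hb; apply/eqP/val_inj.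
rewrite big1; last first.
  by move=> b _; rewrite (_ : (b == j :> nat) = false) ?mulr0 //; apply/negbTE; have := ltn_ord b; lia.
by rewrite bin_small ?mulr0 //; lia.
Qed.

Definition rel : {poly {poly int}} := (bvX - 1) * (bvY - 1) - 1.

Lemma Lrel_mono k i j : Lf k (rel * (('X^j)%:P * 'X^i)) = 0.
Proof.
have -> : rel * (('X^j)%:P * 'X^i) = ('X^(j.+1))%:P * 'X^(i.+1)
   - ('X^j)%:P * 'X^(i.+1) - ('X^(j.+1))%:P * 'X^i.
  by rewrite /rel /bvX /bvY !exprS !rmorphM /=; ring.
rewrite !LD !LN !Lmono.
have [hik|hik] := ltnP i k.
  idtac.
  rewrite ifT ?(ltnW hik) // (_ : (k - i = (k - i.+1).+1)%N); last by lia.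
  rewrite binS PoszD !exprS; ring.
idtac.
case: leqP => h; last by rewrite !subr0.
by rewrite (_ : (k - i = 0)%N) ?bin0n ?mulr0 ?subr0 //; lia.
Qed.

Lemma Lrel k H : Lf k (rel * H) = 0.
Proof.
have -> : H = \sum_(i < size H) \sum_(j < size H`_i) ((H`_i)`_j)%:P%:P * (('X^j)%:P * 'X^i).
  rewrite -{1}[H]coefK poly_def; apply: eq_bigr => i _.
  rewrite -mul_polyC -{1}[H`_i]coefK poly_def rmorph_sum mulr_suml.
  apply: eq_bigr => j _.
  by rewrite -mul_polyC rmorphM /= mulrA.
rewrite mulr_sumr Lsum big1 // => i _.
rewrite mulr_sumr Lsum big1 // => j _.
by rewrite mulrCA LC Lrel_mono mulr0.
Qed.

Notation u := (bvX - 1 : {poly {poly int}}).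
Notation v := (bvY - 1 : {poly {poly int}}).

Lemma Lpow k m F : Lf k ((u * v) ^+ m * F) = Lf k F.
Proof.
have -> : (u * v) ^+ m * F = F + rel * ((\sum_(i < m) (u * v) ^+ i) * F).
  by rewrite mulrA /rel -subrX1; ring.
by rewrite LD Lrel addr0.
Qed.

Lemma Lterm k (rS rA : int) (a : nat) : 0 <= rS -> rA <= rS -> rA <= a%:Z ->
  Lf k (u ^+ `|rS - rA| * v ^+ `|a%:Z - rA|) = Lf k (u ^+ `|rS| * v ^+ a).
Proof.
move=> h0 h1 h2.
have [hA|hA] := leP 0 rA.
  have e1 : `|rS|%N = (`|rS - rA| + `|rA|)%N by lia.
  have e2 : a = (`|a%:Z - rA| + `|rA|)%N by lia.
  rewrite e1 {2}e2 !exprD -(Lpow k `|rA| (u ^+ _ * v ^+ _)) exprMn; congr Lf; ring.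
have e1 : `|rS - rA|%N = (`|rS| + `|rA|)%N by lia.
have e2 : `|a%:Z - rA|%N = (a + `|rA|)%N by lia.
rewrite e1 e2 !exprD -(Lpow k `|rA| (u ^+ `|rS| * v ^+ a)) exprMn; congr Lf; ring.
Qed.

Lemma sum_subsets (E : finType) (w : {poly {poly int}}) :
  \sum_(A : {set E}) w ^+ #|A| = (w + 1) ^+ #|E|.
Proof.
rewrite -[RHS]prodr_const (bigA_distr _ _ (fun _ => w) (fun _ => 1)).
apply: eq_bigr => A _.
by rewrite -big_mkcond prodr_const.
Qed.

Lemma Lfinal k n d : Lf k ((v ^+ d) * 'X^n) =
  if (k < n)%N then 0 else if k == n then (-1) ^+ d else Lf k ((v ^+ d) * 'X^n).
Proof.
case: ltnP => hkn.
  rewrite /Lf big1 // => i _; rewrite big1 // => j _.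
  by rewrite coefMXn (_ : (i < n)%N) ?coef0 ?mulr0 //; have := ltn_ord i; lia.
case: eqP => // ->.
rewrite /Lf big_ord_recr /= big1 ?add0r; last first.
  move=> i _; rewrite big1 // => j _.
  by rewrite coefMXn (_ : (i < n)%N) ?coef0 ?mulr0.
rewrite subnn big_ord1 /= coefMXn ltnn subnn bin0 expr0 mul1r.
have -> : v ^+ d = (('X - 1) ^+ d)%:P by rewrite /bvY -polyC1 -rmorphB -rmorphXn.
rewrite coefC /= -horner_coef0.
by rewrite mul1r horner_exp hornerXsubC sub0r.
Qed.

Lemma Ltutte (E : finType) (r : {set E} -> int) k : ranked_set r ->
  Lf k (tutte r) = Lf k (v ^+ `|(#|E|)%:Z - r setT| * 'X^#|E|).
Proof.
case=> r0 rS rA.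
have hS : 0 <= r setT by rewrite -r0.
have hSn : r setT <= (#|E|)%:Z by have := rA setT; rewrite cardsT.
rewrite /tutte /corank_nullity Lsum.
under eq_bigr => A _ do rewrite (@Lterm k _ _ _ hS (rS A) (rA A)).
rewrite -Lsum -mulr_sumr sum_subsets subrK.
set n := #|E|; set d := `|n%:Z - r setT|%N.
have en : n = (`|r setT| + d)%N by rewrite /d; lia.
rewrite -(Lpow k d).
have -> : (u * v) ^+ d * (u ^+ `|r setT| * bvY ^+ n) = v ^+ d * (u * bvY) ^+ n.
  by rewrite en !exprMn !exprD; ring.
have -> : v ^+ d * (u * bvY) ^+ n = v ^+ d * 'X^n + rel * (v ^+ d *
   \sum_(i < n) (u * bvY) ^+ (n.-1 - i) * bvX ^+ i).
  have : (u * bvY) ^+ n - bvX ^+ n = (u * bvY - bvX) * \sum_(i < n) (u * bvY) ^+ (n.-1 - i) * bvX ^+ i by apply: subrXX.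
  have -> : u * bvY - bvX = rel by rewrite /rel; ring.
  move=> h; rewrite mulrCA -h /bvX; ring.
by rewrite LD Lrel addr0.
Qed.

Theorem theorem3p1 (E : finType) (r : {set E} -> int) :
  ranked_set r ->
  (forall k : nat, (k < #|E|)%N ->
     \sum_(i < k.+1) \sum_(j < (k - i).+1)
        (-1) ^+ j * ('C(k - i, j))%:Z * tutte_coef r i j = 0) /\
  (\sum_(i < #|E|.+1) \sum_(j < (#|E| - i).+1)
        (-1) ^+ j * ('C(#|E| - i, j))%:Z * tutte_coef r i j
     = (-1) ^ ((#|E|)%:Z - r setT)).
Proof.
move=> hr; have hr' := hr; case: hr' => r0 rS rA.
have hS : 0 <= r setT by rewrite -r0.
have hSn : r setT <= (#|E|)%:Z by have := rA setT; rewrite cardsT.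
split.
  move=> k hk; change (Lf k (tutte r) = 0).
  by rewrite (@Ltutte _ _ k hr) Lfinal hk.
change (Lf #|E| (tutte r) = (-1) ^ ((#|E|)%:Z - r setT)).
rewrite (@Ltutte _ _ #|E| hr) Lfinal ltnn eqxx.
have -> : (#|E|)%:Z - r setT = `|(#|E|)%:Z - r setT|%N.
  by rewrite gez0_abs // subr_ge0.
by [].
Qed.
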